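(* Every finite distributive lattice $L$ with more than one element can be generated from the one-element lattice $\mathbf{1}$ by finitely many expansions $\boxplus$: there are lattices $L_0\cong\mathbf{1},L_1,\dots,L_m$ with $L_m\cong L$ such that for each $i\ge1$, $L_i=L_{i-1}\boxplus K_i$ for some cutting $K_i$ of $L_{i-1}$.
   Context: For a finite poset $P$, $\mathcal{F}(P)$ is the set of filters (up-sets) of $P$ ordered by reverse inclusion; it is a finite distributive lattice with least element $P$ and greatest element $\emptyset$, and $\mathcal{F}(\emptyset)$ is the one-element lattice. Every finite distributive lattice is isomorphic to some $\mathcal{F}(P)$. A cutting of a finite distributive lattice $L$ is an interval $K=[\hat0_K,\hat1_K]$ of $L$ such that every maximal chain of $L$ meets $K$. For a cutting $K$ of $L=\mathcal{F}(P)$, let $S=\hat0_K\setminus\hat1_K$, $S_0$ the set of maximal elements of $P\setminus\hat0_K$, $S_1$ the set of minimal elements of $\hat1_K$. The poset $P_K$ is $P\cup\{x_K\}$ ($x_K$ new) where the order on $P$ is unchanged, $z<x_K$ iff $z\le s$ for some $s\in S_0$, $x_K<y$ iff $y\ge s$ for some $s\in S_1$, and $x_K$ is incomparable to every element of $S$. The convex expansion is $L\boxplus K:=\mathcal{F}(P_K)$. *)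

(* Defs.v *)
From HB Require Import structures.
From mathcomp Require Import all_boot all_order.
Set Implicit Arguments. Unset Strict Implicit. Unset Printing Implicit Defensive.

Section Filters.
Variables (n : nat) (le : rel 'I_n).

Definition plt (x y : 'I_n) : bool := (x != y) && le x y.

Definition is_filter (F : {set 'I_n}) : bool :=
  [forall x, forall y, ((x \in F) && le x y) ==> (y \in F)].

(* order of the lattice F(P): reverse inclusion *)
Definition Fle (A B : {set 'I_n}) : bool := B \subset A.

Definition is_chain (C : {set {set 'I_n}}) : bool :=
  [forall A in C, is_filter A] &&
  [forall A in C, forall B in C, Fle A B || Fle B A].

Definition is_max_chain (C : {set {set 'I_n}}) : bool :=
  is_chain C && [forall C', (is_chain C' && (C \subset C')) ==> (C' == C)].

(* cutting K = [a, b] of F(P) (a = bottom of K, b = top of K) *)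
Definition is_cutting (a b : {set 'I_n}) : bool :=
  [&& is_filter a, is_filter b, Fle a b &
   [forall C, is_max_chain C ==>
      [exists F in C, Fle a F && Fle F b]]].

Definition S0 (a : {set 'I_n}) : {set 'I_n} :=
  [set x | (x \notin a) && [forall y, (y \notin a) ==> ~~ plt x y]].
Definition S1 (b : {set 'I_n}) : {set 'I_n} :=
  [set x | (x \in b) && [forall y, (y \in b) ==> ~~ plt y x]].

(* The poset P_K on 'I_n.+1, with the new element x_K = ord_max. *)
Definition expand (a b : {set 'I_n}) : rel 'I_n.+1 :=
  fun i j =>
    match unlift ord_max i, unlift ord_max j with
    | Some i', Some j' => le i' j'
    | Some i', None => [exists s in S0 a, le i' s]
    | None, Some j' => [exists s in S1 b, le s j']
    | None, None => true
    end.

End Filters.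

(* generated n le : the lattice F(P) for P = ('I_n, le) is L_m in a sequence
   L_0 = F(empty) (one element), L_i = L_{i-1} [+] K_i with K_i a cutting. *)
Inductive generated : forall n, rel 'I_n -> Prop :=
  | gen0 (le : rel 'I_0) : generated le
  | genS n (le : rel 'I_n) (a b : {set 'I_n}) :
      generated le -> is_cutting le a b -> generated (expand le a b).

(* L is isomorphic (as an ordered set, hence as a lattice) to F(P) *)
Definition iso_to_filters (d : Order.disp_t) (L : finPOrderType d)
  (n : nat) (le : rel 'I_n) : Prop :=
  exists f : L -> {set 'I_n},
    [/\ injective f,
        forall x, is_filter le (f x),
        forall F, is_filter le F -> exists x, f x = F &
        forall x y, (x <= y)%O = Fle (f x) (f y)].

(* Main.v *)
Require Import Defs.
From mathcomp Require Import all_boot all_order.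
Set Implicit Arguments. Unset Strict Implicit. Unset Printing Implicit Defensive.
Import Order.TTheory.

Lemma no_ord0 (i : 'I_0) : False. Proof. by case: i. Qed.

Lemma cut0 n (le : rel 'I_n) (a : {set 'I_n}) :
  is_filter le a -> is_cutting le a set0.
Proof.
move=> fa.
have f0 : is_filter le set0.
  by apply/forallP => x; apply/forallP => y; rewrite in_set0.
apply/and4P; split => //; first by rewrite /Fle sub0set.
apply/forallP => C; apply/implyP => /andP [chC maxC].
have C0 : set0 \in C.
  have ch' : is_chain le (set0 |: C).
    case/andP: chC => /forall_inP h1 /forall_inP h2; apply/andP; split.
      by apply/forall_inP => A; rewrite in_setU1 => /predU1P [->|/h1].
    apply/forall_inP => A; rewrite in_setU1 => /predU1P [->|AC];
      apply/forall_inP => B; rewrite in_setU1 => /predU1P [->|BC].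
    - by rewrite /Fle sub0set.
    - by rewrite /Fle sub0set orbT.
    - by rewrite /Fle sub0set.
    - by move/forall_inP: (h2 A AC) => /(_ B BC).
  move/forallP: maxC => /(_ (set0 |: C)); rewrite ch' subsetUr /= => /eqP <-.
  by rewrite setU11.
by apply/existsP; exists set0; rewrite C0 /Fle !sub0set.
Qed.

Section Build.
Variables (T : finType) (r : rel T).
Hypotheses (rr : reflexive r) (ra : antisymmetric r) (rt : transitive r).

Let c x := #|[set y | r y x]|.

Lemma c_lt x y : r x y -> x != y -> c x < c y.
Proof.
move=> rxy nxy; apply: proper_card; apply/properP; split.
  apply/subsetP => z; rewrite !inE => rzx; exact: (rt rzx rxy).
exists y; rewrite !inE ?rr //; apply/negP => ryx; move/negP: nxy; apply.
by apply/eqP; apply: ra; rewrite rxy ryx.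
Qed.

Lemma build k : forall A : {set T}, #|A| = k ->
  exists (le : rel 'I_k) (g : 'I_k -> T),
    [/\ generated le, injective g, forall i, g i \in A,
        forall x, x \in A -> exists i, g i = x &
        forall i j, le i j = r (g i) (g j)].
Proof.
elim: k => [|k IH] A hA.
  exists (fun _ _ => true), (fun i => False_rect T (no_ord0 i)).
  split.
  - exact: gen0.
  - by move=> i; case: (no_ord0 i).
  - by move=> i; case: (no_ord0 i).
  - by move=> x; rewrite (cards0_eq hA) inE.
  - by move=> i; case: (no_ord0 i).
have [x0 Ax0] : exists x0, x0 \in A by apply/set0Pn; rewrite -card_gt0 hA.
have [m Am mmax] : exists2 m, m \in A & forall y, y \in A -> c y <= c m.
  by case: (@arg_maxnP _ x0 (mem A) c Ax0) => z Az hz; exists z.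
have mtop y : y \in A -> r m y -> y = m.
  move=> Ay my; apply/eqP; apply: contraT => ym.
  have my' : m != y by rewrite eq_sym.
  by have := c_lt my my'; rewrite ltnNge mmax.
have hA' : #|A :\ m| = k.
  by move: hA; rewrite (cardsD1 m) Am add1n => -[].
have [le' [g' [gen' ginj' gA' gcov' gle']]] := IH (A :\ m) hA'.
pose a := [set i | ~~ r (g' i) m].
pose g := fun i : 'I_k.+1 => if unlift ord_max i is Some i' then g' i' else m.
exists (expand le' a set0), g.
have gl i' : g (lift ord_max i') = g' i' by rewrite /g liftK.
have gm : g ord_max = m by rewrite /g unlift_none.
have ordP (i : 'I_k.+1) : i = ord_max \/ exists i', i = lift ord_max i'.
  by case: (unliftP ord_max i) => [i' ->|->]; [right; exists i'|left].
have g'm i' : g' i' != m by have := gA' i'; rewrite !inE => /andP[].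
have g'A i' : g' i' \in A by have := gA' i'; rewrite !inE => /andP[].
split.
- apply: genS gen' _; apply: cut0.
  apply/forallP=> x; apply/forallP => y; apply/implyP => /andP[].
  rewrite !inE gle' => nx xy; apply/negP => ym; move/negP: nx; apply.
  exact: (rt xy ym).
- move=> i j; case: (ordP i) => [->|[i' ->]]; case: (ordP j) => [->|[j' ->]];
    rewrite ?gl ?gm //.
  + by move=> e; move: (g'm j'); rewrite -e eqxx.
  + by move=> e; move: (g'm i'); rewrite e eqxx.
  + by move/ginj' ->.
- by move=> i; case: (ordP i) => [->|[i' ->]]; rewrite ?gl ?gm.
- move=> x Ax; case: (eqVneq x m) => [->|xm]; first by exists ord_max.
  have [|i' <-] := gcov' x; first by rewrite !inE xm.
  by exists (lift ord_max i'); rewrite gl.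
- move=> i j; case: (ordP i) => [->|[i' ->]]; case: (ordP j) => [->|[j' ->]];
    rewrite /expand ?liftK ?unlift_none ?gl ?gm.
  + by rewrite rr.
  + have -> : [exists s in S1 le' set0, le' s j'] = false.
      by apply/existsP => -[s]; rewrite !inE.
    apply/esym/negbTE/negP => mj; have := mtop _ (g'A j') mj.
    by move/eqP; rewrite (negbTE (g'm j')).
  + apply/existsP/idP => [[s /andP[]]|im].
      rewrite !inE negbK => /andP[sm _]; rewrite gle' => iss.
      exact: (rt iss sm).
    case: (@arg_maxnP _ i' (fun x => r (g' x) m && r (g' i') (g' x))
              (fun x => c (g' x))) => [|s /andP[sm iss] smax].
      by rewrite im rr.
    exists s; rewrite gle' iss andbT !inE negbK sm /=.
    apply/forallP => y; apply/implyP; rewrite inE negbK => ym.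
    rewrite /plt; apply/negP => /andP[ys sy]; rewrite gle' in sy.
    have gsy : g' s != g' y by apply/eqP => /ginj' e; rewrite e eqxx in ys.
    have hy : c (g' y) <= c (g' s) by apply: smax; rewrite ym (rt iss sy).
    by have := c_lt sy gsy; rewrite ltnNge hy.
  + exact: gle'.
Qed.

End Build.

Section Birk.
Variables (d : Order.disp_t) (L : finDistrLatticeType d).
Local Open Scope order_scope.

Definition JI := [set x : L | [exists z, ~~ (x <= z)] &&
  [forall u, forall v, (x == u `|` v) ==> (x == u) || (x == v)]].

Lemma card_lt (w x : L) : w <= x -> w != x ->
  leq (#|[set z : L | z <= w]|).+1 #|[set z : L | z <= x]|.
Proof.
move=> wx wnx; apply: proper_card; apply/properP; split.
  by apply/subsetP => z; rewrite !inE => zw; exact: le_trans zw wx.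
exists x; rewrite !inE ?lexx //; apply/negP => xw; case/eqP: wnx.
by apply: le_anti; rewrite xw wx.
Qed.

Lemma below_JI (x y : L) : (forall j, j \in JI -> j <= x -> j <= y) -> x <= y.
Proof.
move: {2}#|[set z : L | z <= x]| (leqnn #|[set z : L | z <= x]|) => N.
elim: N x => [|N IH] x hx h.
  by move: hx; rewrite leqn0 cards_eq0 => /eqP/setP/(_ x); rewrite !inE lexx.
case: (boolP (x \in JI)) => [xJ|]; first exact: h.
rewrite inE negb_and => /orP[|].
  by rewrite negb_exists => /forallP hb; have := hb y; rewrite negbK.
rewrite negb_forall => /existsP[u]; rewrite negb_forall => /existsP[v].
rewrite negb_imply negb_or => /and3P[/eqP xuv xu xv].
have ltc w : w <= x -> w != x -> leq #|[set z : L | z <= w]| N.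
  by move=> wx wnx; rewrite -ltnS; apply: leq_trans hx; apply: card_lt.
have ux : u <= x by rewrite xuv leUl.
have vx : v <= x by rewrite xuv leUr.
rewrite xuv leUx; apply/andP; split.
  apply: IH (ltc u ux _) _; first by rewrite eq_sym.
  by move=> j jJ ju; apply: h jJ (le_trans ju ux).
apply: IH (ltc v vx _) _; first by rewrite eq_sym.
by move=> j jJ ju; apply: h jJ (le_trans ju vx).
Qed.

Variable x0 : L.
Definition bot := fintype.arg_min x0 xpredT (fun x : L => #|[set z : L | z <= x]|).

Lemma botP z : bot <= z.
Proof.
rewrite /bot; case: (@arg_minnP _ x0 xpredT (fun x => #|[set z : L | z <= x]|) isT) => b _ hb.
have e : b `&` z = b.
  apply/eqP; apply: contraT => ne; have := card_lt (leIl b z) ne.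
  by rewrite ltnNge hb.
by rewrite -e leIr.
Qed.

Lemma le_foldr (z : L) s : z \in s -> z <= foldr Order.join bot s.
Proof.
elim: s => //= w s IH; rewrite inE => /orP[/eqP->|/IH h]; first exact: leUl.
exact: le_trans h (leUr _ _).
Qed.

Lemma JI_prime (j : L) s : j \in JI -> j <= foldr Order.join bot s ->
  exists2 z, z \in s & j <= z.
Proof.
elim: s => [|z s IH] /=.
  move=> jJ jb; move: jJ; rewrite inE => /andP[/existsP[w]].
  by rewrite (le_trans jb (botP w)).
move=> jJ hj.
have e : j = (j `&` z) `|` (j `&` foldr Order.join bot s).
  by rewrite -meetUr meet_l.
move: (jJ); rewrite inE => /andP[_ /forallP/(_ (j `&` z))/forallP
   /(_ (j `&` foldr Order.join bot s))]; rewrite -e eqxx /= => /orP[/eqP jz|/eqP jr].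
  by exists z; rewrite ?mem_head // jz leIr.
have jr' : j <= foldr Order.join bot s by rewrite jr leIr.
have [z' z's jz'] := IH jJ jr'.
by exists z'; rewrite // inE z's orbT.
Qed.

End Birk.

Theorem corollary2 (d : Order.disp_t) (L : finDistrLatticeType d)
  (hL : 1 < #|L|) :
  exists (n : nat) (le : rel 'I_n), generated le /\ iso_to_filters L le.
Proof.
have : 0 < #|L| by apply: leq_trans hL.
case/card_gt0P => x0 _.
have rr : reflexive (fun x y : L => (x <= y)%O) by move=> x; exact: lexx.
have ra : antisymmetric (fun x y : L => (x <= y)%O) by move=> x y; exact: le_anti.
have rt : transitive (fun x y : L => (x <= y)%O) by move=> x y z; exact: le_trans.
have [le [g [gen ginj gJ gcov gle]]] := build rr ra rt (erefl #|JI L|).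
exists #|JI L|, le; split => //.
have ordf x y : (x <= y)%O = Fle [set i | ~~ (g i <= x)%O] [set i | ~~ (g i <= y)%O].
  rewrite /Fle; apply/idP/subsetP => [xy i|h].
    by rewrite !inE; apply: contra => ix; exact: le_trans ix xy.
  apply: below_JI => j jJ jx; have [i gi] := gcov j jJ; rewrite -gi in jx *.
  case: (boolP (g i <= y)%O) => // ny; have := h i; rewrite !inE ny jx => /(_ isT).
  done.
exists (fun x => [set i | ~~ (g i <= x)%O]); split.
- move=> x y /= e; apply: le_anti; apply/andP; split; rewrite ordf e /Fle //.
- move=> x; apply/forallP => i; apply/forallP => j; apply/implyP => /andP[].
  rewrite !inE gle => ni ij; apply: contra ni => jx; exact: le_trans ij jx.
- move=> F fF.
  exists (foldr Order.join (bot x0) [seq g i | i <- enum (~: F)]).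
  apply/setP => i; rewrite inE.
  case: (boolP (i \in F)) => iF.
    apply/negP => gix; have [z zs gz] := JI_prime (gJ i) gix.
    move/mapP: zs => [j]; rewrite mem_enum inE => jF zj.
    move: fF => /forallP/(_ i)/forallP/(_ j); rewrite iF gle -zj gz /= => jF'.
    by rewrite jF' in jF.
  apply: negbF; apply: le_foldr; apply/mapP; exists i => //.
  by rewrite mem_enum inE.
- exact: ordf.
Qed.
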